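(* Every set $SQ$ of priority derivation steps of stack-queue type is specialisation independent: whenever $Ds_1,Ds_2\in SQ$ and $Ds_2$ is a lowering of $Ds_1$ by a p-goal $X$, then $Ds_2$ is a congruent lowering of $Ds_1$ by $X$. Consequently every complete set of stack-queue type is a specialisation independent scheduling rule.
   Context: A p-atom is a pair $a[p]$ of an atom $a$ and a rational priority $p$. A p-goal is a finite set of p-atoms with pairwise distinct priorities, regarded as a list ordered by increasing priority. Substitutions act on atoms and leave priorities unchanged. A clause is $h\leftarrow B$ with $h$ an atom and $B$ a p-goal. For p-goals with no common priority, $F+G=F\cup G$; $F|G$ denotes $F+G$ when all priorities of $F$ are smaller than those of $G$. A shifting $\underline{\pi}$ is a strictly increasing bijection $\mathbb{Q}\to\mathbb{Q}$ acting on priorities ($G\underline\pi$). Priority derivation step: for a p-goal $a|F$ ($a$ of least priority), clause $c=(h\leftarrow B)$, renaming $\xi$ with $var(a|F)\cap var(c\xi)=\emptyset$, idempotent relevant mgu $\theta$ of $a$ and $h\xi$, shifting $\underline{\pi}$ with $F$, $B\xi\underline{\pi}$ sharing no priority: $a|F\xrightarrow{c\xi,\theta}(F+B\xi\underline{\pi})\theta$. Lowering: for $c=(h\leftarrow B)$, a step $a\lambda\underline{\sigma}|(K\lambda\underline{\sigma}+X)\xrightarrow{c}(X+K\lambda\underline{\sigma}+B\xi''\underline{\theta}'')\alpha''$ is a lowering by $X$ of a step $a|K\xrightarrow{c}(K+B\xi'\underline{\theta}')\alpha'$ ($\lambda$ a substitution, $\underline\sigma$ a shifting); it is a congruent lowering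 by $X$ if some shifting $\underline{\rho}$ has $K\underline{\rho}=K\underline{\sigma}$ and $B\underline{\theta}'\underline{\rho}=B\underline{\theta}''$. Steps are (congruent) lowerings of each other if each is a (congruent) lowering of the other. A set $S$ of steps is complete if (i) whenever some step $G\xrightarrow{c}\cdot$ exists, some step $G\xrightarrow{c}\cdot$ lies in $S$, and (ii) $S$ contains every step that is a congruent lowering of each other with a step of $S$; deterministic if two steps of $S$ that are lowerings of each other are congruent lowerings of each other; specialisation independent as in the claim. A scheduling rule is a complete deterministic set; a specialisation independent scheduling rule is a complete specialisation independent set. Stack-queue type: a set $SQ$ of priority derivation steps is of stack-queue type if for every clause $c=(h\leftarrow B)$ there are p-goals $M_s,M_q$ with $B=M_s|M_q$ such that every step $a|K\xrightarrow{c\xi,\mu}R$ in $SQ$ satisfies $R=(M_s\xi\underline{\gamma}|K|M_q\xi\underline{\gamma})\mu$ for some shifting $\underline{\gamma}$. *)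

(* Defs.v *)
From mathcomp Require Import all_boot all_order all_algebra.
Set Implicit Arguments. Unset Strict Implicit. Unset Printing Implicit Defensive.
Import Order.TTheory GRing.Theory Num.Theory.
Local Open Scope ring_scope.

Inductive term : Type :=
| Var : nat -> term
| Fn  : nat -> seq term -> term.

Record atom : Type := Atom { apred : nat; aargs : seq term }.

Definition subst := nat -> term.

Fixpoint tsubst (s : subst) (t : term) : term :=
  match t with
  | Var x => s x
  | Fn f ts => Fn f (map (tsubst s) ts)
  end.

Definition asubst (s : subst) (a : atom) : atom :=
  Atom (apred a) (map (tsubst s) (aargs a)).

Fixpoint tvars (t : term) : seq nat :=
  match t with
  | Var x => [:: x]
  | Fn _ ts => flatten (map tvars ts)
  end.

Definition avars (a : atom) : seq nat := flatten (map tvars (aargs a)).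

Definition renaming (xi : subst) : Prop :=
  exists f : nat -> nat, (forall x, xi x = Var (f x)) /\ bijective f.

Definition unifier (th : subst) (a b : atom) : Prop := asubst th a = asubst th b.

Definition mgu (th : subst) (a b : atom) : Prop :=
  unifier th a b /\
  forall eta, unifier eta a b -> exists delta, forall x, eta x = tsubst delta (th x).

Definition idempotent (th : subst) : Prop :=
  forall x, tsubst th (th x) = th x.

Definition relevant (th : subst) (a b : atom) : Prop :=
  forall x, th x <> Var x ->
    (x \in avars a ++ avars b) /\
    (forall y, y \in tvars (th x) -> y \in avars a ++ avars b).

Definition patom := (atom * rat)%type.

(* a p-goal is represented as the list of its p-atoms ordered by strictly
   increasing priority (this representation is canonical) *)
Definition pgoal := seq patom.

Definition pgoal_wf (G : pgoal) : bool := sorted (fun p q : patom => p.2 < q.2) G.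

Definition prios (G : pgoal) : seq rat := map snd G.

Definition gvars (G : pgoal) : seq nat := flatten (map (fun p : patom => avars p.1) G).

Definition prio_disjoint (F G : pgoal) : Prop :=
  forall p, p \in prios F -> p \notin prios G.

(* F + G (meaningful when F, G have no common priority): merged list *)
Definition pplus (F G : pgoal) : pgoal :=
  sort (fun p q : patom => p.2 <= q.2) (F ++ G).

Definition gsubst (s : subst) (G : pgoal) : pgoal :=
  map (fun p : patom => (asubst s p.1, p.2)) G.

Record shifting : Type := Shifting {
  shf :> rat -> rat;
  shf_incr : forall x y : rat, x < y -> shf x < shf y;
  shf_bij : bijective shf }.

Definition gshift (pi : shifting) (G : pgoal) : pgoal :=
  map (fun p : patom => (p.1, pi p.2)) G.

(* F | G : F + G, all priorities of F smaller than those of G *)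
Definition pbar_ok (F G : pgoal) : Prop :=
  forall p q, p \in prios F -> q \in prios G -> p < q.

Record clause : Type := Clause {
  chead : atom;
  cbody : pgoal;
  cbody_wf : pgoal_wf cbody }.

Definition cvars_ren (xi : subst) (c : clause) : seq nat :=
  avars (asubst xi (chead c)) ++ gvars (gsubst xi (cbody c)).

(* A step  G --(c xi, theta)--> R  together with the shifting pi used. *)
Record step : Type := Step {
  s_goal : pgoal;
  s_clause : clause;
  s_ren : subst;
  s_mgu : subst;
  s_shift : shifting;
  s_res : pgoal }.

Definition is_step (Ds : step) : Prop :=
  let c := s_clause Ds in
  let xi := s_ren Ds in
  let th := s_mgu Ds in
  let pi := s_shift Ds in
  pgoal_wf (s_goal Ds) /\
  exists (a : patom) (F : pgoal),
    s_goal Ds = a :: F /\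
    renaming xi /\
    (forall x, x \in gvars (s_goal Ds) -> x \notin cvars_ren xi c) /\
    mgu th a.1 (asubst xi (chead c)) /\ idempotent th /\
    relevant th a.1 (asubst xi (chead c)) /\
    prio_disjoint F (gshift pi (gsubst xi (cbody c))) /\
    s_res Ds = gsubst th (pplus F (gshift pi (gsubst xi (cbody c)))).

Definition step_set (S : step -> Prop) : Prop := forall Ds, S Ds -> is_step Ds.

Definition lowering_wit (Ds1 Ds2 : step) (X : pgoal) (lam : subst) (sig : shifting)
    (a : patom) (K : pgoal) : Prop :=
  let c := s_clause Ds1 in
  let B := cbody c in
  let Klamsig := gshift sig (gsubst lam K) in
  is_step Ds1 /\ is_step Ds2 /\
  s_clause Ds2 = c /\
  s_goal Ds1 = a :: K /\
  pgoal_wf X /\ prio_disjoint Klamsig X /\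
  s_goal Ds2 = (asubst lam a.1, sig a.2) :: pplus Klamsig X /\
  s_res Ds1 = gsubst (s_mgu Ds1)
                (pplus K (gshift (s_shift Ds1) (gsubst (s_ren Ds1) B))) /\
  s_res Ds2 = gsubst (s_mgu Ds2)
                (pplus (pplus X Klamsig) (gshift (s_shift Ds2) (gsubst (s_ren Ds2) B))).

Definition lowering (Ds1 Ds2 : step) (X : pgoal) : Prop :=
  exists lam sig a K, lowering_wit Ds1 Ds2 X lam sig a K.

Definition congruent_lowering (Ds1 Ds2 : step) (X : pgoal) : Prop :=
  exists lam sig a K, lowering_wit Ds1 Ds2 X lam sig a K /\
    exists rho : shifting,
      gshift rho K = gshift sig K /\
      gshift rho (gshift (s_shift Ds1) (cbody (s_clause Ds1)))
        = gshift (s_shift Ds2) (cbody (s_clause Ds1)).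

Definition lowerings_each_other (Ds1 Ds2 : step) : Prop :=
  (exists X, lowering Ds1 Ds2 X) /\ (exists X, lowering Ds2 Ds1 X).

Definition congruent_lowerings_each_other (Ds1 Ds2 : step) : Prop :=
  (exists X, congruent_lowering Ds1 Ds2 X) /\ (exists X, congruent_lowering Ds2 Ds1 X).

Definition complete (S : step -> Prop) : Prop :=
  step_set S /\
  (forall (G : pgoal) (c : clause),
      (exists Ds, is_step Ds /\ s_goal Ds = G /\ s_clause Ds = c) ->
      exists Ds, S Ds /\ s_goal Ds = G /\ s_clause Ds = c) /\
  (forall Ds Ds', S Ds -> is_step Ds' -> congruent_lowerings_each_other Ds Ds' -> S Ds').

Definition deterministic (S : step -> Prop) : Prop :=
  forall Ds1 Ds2, S Ds1 -> S Ds2 ->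
    lowerings_each_other Ds1 Ds2 -> congruent_lowerings_each_other Ds1 Ds2.

Definition specialisation_independent (S : step -> Prop) : Prop :=
  forall Ds1 Ds2 X, S Ds1 -> S Ds2 -> lowering Ds1 Ds2 X -> congruent_lowering Ds1 Ds2 X.

Definition scheduling_rule (S : step -> Prop) : Prop := complete S /\ deterministic S.

Definition spec_indep_scheduling_rule (S : step -> Prop) : Prop :=
  complete S /\ specialisation_independent S.

Definition stack_queue_type (SQ : step -> Prop) : Prop :=
  step_set SQ /\
  forall c : clause, exists Ms Mq : pgoal,
    pbar_ok Ms Mq /\ cbody c = Ms ++ Mq /\
    forall Ds, SQ Ds -> s_clause Ds = c ->
      forall (a : patom) (K : pgoal), s_goal Ds = a :: K ->
      exists gam : shifting,
        let Msg := gshift gam (gsubst (s_ren Ds) Ms) in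
        let Mqg := gshift gam (gsubst (s_ren Ds) Mq) in
        pbar_ok Msg K /\ pbar_ok K Mqg /\ pbar_ok Msg Mqg /\
        s_res Ds = gsubst (s_mgu Ds) (Msg ++ K ++ Mqg).

(* Main.v *)
Require Import Defs.
From mathcomp Require Import all_boot all_order all_algebra.
From mathcomp Require Import ring lra.
Set Implicit Arguments. Unset Strict Implicit. Unset Printing Implicit Defensive.
Import Order.TTheory GRing.Theory Num.Theory.
Local Open Scope ring_scope.

Definition gfun (a b c x : rat) : rat :=
  if a <= x then x else if b <= x then c + (x - b) * ((a - c) / (a - b)) else x + (c - b).

Lemma gfun_incr a b c : b < a -> c < a -> forall x y, x < y -> gfun a b c x < gfun a b c y.
Proof.
move=> ba ca x y xy; rewrite /gfun.
set k := (a - c) / (a - b).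
have kp : 0 < k by apply: divr_gt0; lra.
have kk : (a - b) * k = a - c by rewrite /k mulrCA divff ?mulr1 //; lra.
case: ifP => hx; case: ifP => hy; try lra;
  (try case: ifP => hbx); (try case: ifP => hby); try nra.
Qed.

Lemma gfun_K a b c : b < a -> c < a -> cancel (gfun a b c) (gfun a c b).
Proof.
move=> ba ca x; rewrite /gfun.
have kk : ((a - c) / (a - b)) * ((a - b) / (a - c)) = 1.
  by field; rewrite !subr_eq0 !gt_eqF.
have kp : 0 < (a - c) / (a - b) by apply: divr_gt0; lra.
have kk2 : (a - b) * ((a - c) / (a - b)) = a - c by field; rewrite subr_eq0 gt_eqF.
move: kk kp kk2; set k := (a - c) / (a - b); set k' := (a - b) / (a - c) => kk kp kk2.
case: (lerP a x) => hx; first by rewrite hx.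
case: (lerP b x) => hbx.
- have -> : (a <= c + (x - b) * k) = false.
    apply/negbTE; rewrite -ltNge. nra.
  have -> : (c <= c + (x - b) * k) = true by apply/idP; nra.
  rewrite addrAC subrr add0r -mulrA kk mulr1; lra.
- have -> : (a <= x + (c - b)) = false by apply/negbTE; rewrite -ltNge; lra.
  have -> : (c <= x + (c - b)) = false by apply/negbTE; rewrite -ltNge; lra.
  lra.
Qed.

Lemma gshift_ex a b c : b < a -> c < a ->
  exists h : shifting, (forall x, a <= x -> h x = x) /\ h b = c.
Proof.
move=> ba ca.
have bij : bijective (gfun a b c).
  by exists (gfun a c b); [apply: gfun_K | apply: gfun_K].
exists (Shifting (gfun_incr ba ca) bij); split => /=.
- by move=> x ax; rewrite /gfun ax.
- by rewrite /gfun leNgt ba lexx /= subrr mul0r addr0.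
Qed.

Lemma trans_ex (t : rat) : exists h : shifting, forall x, h x = x + t.
Proof.
have inc : forall x y : rat, x < y -> x + t < y + t by move=> x y; rewrite ltrD2r.
have bij : bijective (fun x : rat => x + t) by exists (fun x => x - t) => x; rewrite ?addrK ?subrK.
by exists (Shifting inc bij).
Qed.

Lemma comp_ex (f g : shifting) : exists h : shifting, forall x, h x = f (g x).
Proof.
have inc : forall x y : rat, x < y -> f (g x) < f (g y) by move=> x y xy; do 2 apply: shf_incr.
have bij : bijective (f \o g) by apply: bij_comp; apply: shf_bij.
by exists (Shifting inc bij).
Qed.

Definition PR (p q : rat * rat) : bool := (p.1 < q.1) && (p.2 < q.2).

Lemma PR_trans : transitive PR.
Proof. by move=> y x z /andP[a b] /andP[c d]; rewrite /PR (lt_trans a c) (lt_trans b d). Qed.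

Lemma extend_ex (s : seq (rat * rat)) : sorted PR s ->
  exists rho : shifting, forall p, p \in s -> rho p.1 = p.2.
Proof.
elim: s => [|p s IH] /=.
  by move=> _; have [h _] := trans_ex 0; exists h.
case: s IH => [|q s] IH.
  move=> _; have [h Hh] := trans_ex (p.2 - p.1); exists h => r.
  by rewrite inE => /eqP ->; rewrite Hh addrC subrK.
move=> Hp; have Hs : sorted PR (q :: s) by case/andP: Hp.
have [rho Hr] := IH Hs.
have /andP[pq1 pq2] : PR p q by case/andP: Hp.
have Hq : forall r, r \in q :: s -> q.2 <= r.2.
  move=> r; rewrite inE => /orP[/eqP -> // |rs].
  have := order_path_min PR_trans Hs => /allP/(_ r rs)/andP[_ ?]; exact: ltW.
have rp : rho p.1 < q.2 by rewrite -(Hr q) ?mem_head // shf_incr.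
have [h [Hh1 Hh2]] := gshift_ex rp pq2.
have [f Hf] := comp_ex h rho.
exists f => r; rewrite inE => /orP[/eqP -> | rs]; first by rewrite Hf Hh2.
by rewrite Hf Hr // Hh1 // Hq.
Qed.

Lemma agree (L1 L2 pB : seq rat) (f g : rat -> rat) :
  sorted <%R pB -> (forall x y, x < y -> f x < f y) -> (forall x y, x < y -> g x < g y) ->
  perm_eq L1 L2 -> perm_eq (L1 ++ map f pB) (L2 ++ map g pB) -> {in pB, f =1 g}.
Proof.
move=> spB fi gi p12 H.
have h : perm_eq (L1 ++ map g pB) (L2 ++ map g pB) by rewrite perm_cat2r.
have h2 : perm_eq (L1 ++ map f pB) (L1 ++ map g pB) by apply: perm_trans H _; rewrite perm_sym.
move: h2; rewrite perm_cat2l => /perm_mem hm.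
apply/eq_in_map; apply: (irr_sorted_eq lt_trans ltxx) => //; rewrite sorted_map; apply: sub_sorted spB => x y /=; [exact: fi | exact: gi].
Qed.

Lemma prios_gsubst s G : prios (gsubst s G) = prios G.
Proof. by rewrite /prios /gsubst -map_comp. Qed.
Lemma prios_gshift (pi : shifting) G : prios (gshift pi G) = map pi (prios G).
Proof. by rewrite /prios /gshift -!map_comp. Qed.
Lemma prios_cat F G : prios (F ++ G) = prios F ++ prios G.
Proof. by rewrite /prios map_cat. Qed.
Lemma prios_pplus F G : perm_eq (prios (pplus F G)) (prios F ++ prios G).
Proof.
have -> : prios (pplus F G) = sort <=%R (prios (F ++ G)) by rewrite /prios sort_map.
by rewrite perm_sort prios_cat.
Qed.

Lemma sorted_cat3 (s1 s2 s3 : seq (rat * rat)) :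
  sorted PR s1 -> sorted PR s2 -> sorted PR s3 ->
  (forall x y, x \in s1 -> y \in s2 -> PR x y) ->
  (forall x y, x \in s2 -> y \in s3 -> PR x y) ->
  (forall x y, x \in s1 -> y \in s3 -> PR x y) ->
  sorted PR (s1 ++ s2 ++ s3).
Proof.
rewrite !(sorted_pairwise PR_trans) => p1 p2 p3 a12 a23 a13.
rewrite !pairwise_cat p1 p2 p3 (allrel_catr PR) !andbT.
by apply/and3P; split => //; [apply/andP; split|]; apply/allrelP => x y; auto.
Qed.

Lemma sorted_prios (G : pgoal) : pgoal_wf G -> sorted <%R (prios G).
Proof. by rewrite /pgoal_wf /prios sorted_map. Qed.

Lemma sorted_pairs (f g : rat -> rat) s :
  (forall x y, x < y -> f x < f y) -> (forall x y, x < y -> g x < g y) ->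
  sorted <%R s -> sorted PR (map (fun q => (f q, g q)) s).
Proof.
move=> fi gi ss; rewrite sorted_map; apply: sub_sorted ss => x y xy.
by rewrite /PR /= fi ?gi.
Qed.

Lemma map_ext2 (f g : rat -> rat) (G : pgoal) : {in prios G, f =1 g} ->
  map (fun p : patom => (p.1, f p.2)) G = map (fun p : patom => (p.1, g p.2)) G.
Proof.
elim: G => //= p G IH H; rewrite (H p.2 (mem_head _ _)) IH // => x xG.
by apply: H; rewrite inE xG orbT.
Qed.

Theorem mainTheorem10 (SQ : step -> Prop) :
  stack_queue_type SQ ->
  specialisation_independent SQ /\
  (complete SQ -> spec_indep_scheduling_rule SQ).
Proof.
move=> [HS Hc].
suff SI : specialisation_independent SQ by split => // Hcomp; split.
move=> Ds1 Ds2 X H1 H2 [lam [sig [a [K Hw]]]].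
exists lam, sig, a, K; split => //.
case: (Hw) => [I1 [I2 [Ecl [Eg1 [_ [_ [Eg2 [Er1 Er2]]]]]]]].
have [Ms [Mq [Hpb [EB Hsq]]]] := Hc (s_clause Ds1).
have [gam1 /= [h11 [h12 [h13 Eres1]]]] := Hsq Ds1 H1 erefl a K Eg1.
have [gam2 /= [h21 [h22 [h23 Eres2]]]] := Hsq Ds2 H2 Ecl _ _ Eg2.
set B := cbody (s_clause Ds1) in EB Er1 Er2 *.
set pi1 := s_shift Ds1 in Er1 *.
set pi2 := s_shift Ds2 in Er2 *.
set Kls := gshift sig (gsubst lam K) in Eg2 Er2 h21 h22 *.
have spB : sorted <%R (prios B) by apply: sorted_prios; apply: cbody_wf.
have EpB : prios B = prios Ms ++ prios Mq by rewrite EB prios_cat.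
have A1 : {in prios B, pi1 =1 gam1}.
  apply: (@agree (prios K) (prios K)) => //; try exact: shf_incr.
  have E := congr1 prios (etrans (esym Er1) Eres1); rewrite !prios_gsubst in E.
  have P := prios_pplus K (gshift pi1 (gsubst (s_ren Ds1) B)).
  rewrite E !prios_cat !prios_gshift !prios_gsubst in P.
  rewrite perm_sym in P; apply: perm_trans P _.
  by rewrite EpB map_cat perm_catCA.
have A2 : {in prios B, pi2 =1 gam2}.
  apply: (@agree (prios (pplus X Kls)) (prios (pplus Kls X))) => //; try exact: shf_incr.
    apply: perm_trans (prios_pplus X Kls) _; rewrite perm_sym.
    by apply: perm_trans (prios_pplus Kls X) _; rewrite perm_catC.
  have E := congr1 prios (etrans (esym Er2) Eres2); rewrite !prios_gsubst in E.
  have P := prios_pplus (pplus X Kls) (gshift pi2 (gsubst (s_ren Ds2) B)).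
  rewrite E !prios_cat !prios_gshift !prios_gsubst in P.
  rewrite perm_sym in P; apply: perm_trans P _.
  by rewrite EpB map_cat perm_catCA.
have sK : sorted <%R (prios K).
  by case: I1 => + _; rewrite Eg1 => /sorted_prios /= /path_sorted.
have [sMs sMq] : sorted <%R (prios Ms) /\ sorted <%R (prios Mq).
  by move: spB; rewrite EpB => /cat_sorted2 [].
have mMs q : q \in prios Ms -> q \in prios B by rewrite EpB mem_cat => ->.
have mMq q : q \in prios Mq -> q \in prios B by rewrite EpB mem_cat orbC => ->.
have inK k : k \in prios K -> sig k \in prios (pplus Kls X).
  move=> kK; rewrite (perm_mem (prios_pplus Kls X)) mem_cat.
  by rewrite /Kls prios_gshift prios_gsubst map_f.
have inM (gm : shifting) xi M q : q \in prios M -> gm q \in prios (gshift gm (gsubst xi M)).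
  by move=> qM; rewrite prios_gshift prios_gsubst map_f.
pose pts := map (fun q => (pi1 q, pi2 q)) (prios Ms) ++ map (fun q => (q, sig q)) (prios K)
            ++ map (fun q => (pi1 q, pi2 q)) (prios Mq).
have spts : sorted PR pts.
  apply: sorted_cat3; try (apply: sorted_pairs => //; exact: shf_incr).
  - move=> x y /mapP[q qs ->] /mapP[k kk ->]; rewrite /PR /=; apply/andP; split.
      by rewrite A1 ?mMs //; apply: h11 => //; exact: inM.
    by rewrite A2 ?mMs //; apply: h21; [exact: inM | exact: inK].
  - move=> x y /mapP[k kk ->] /mapP[q qs ->]; rewrite /PR /=; apply/andP; split.
      by rewrite A1 ?mMq //; apply: h12 => //; exact: inM.
    by rewrite A2 ?mMq //; apply: h22; [exact: inK | exact: inM].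
  - move=> x y /mapP[q qs ->] /mapP[q' qs' ->]; rewrite /PR /=.
    by rewrite !shf_incr // Hpb.
have [rho Hr] := extend_ex spts.
exists rho; split.
  apply: map_ext2 => k kK; apply: (Hr (k, sig k)).
  by rewrite /pts !mem_cat (map_f (fun q => (q, sig q)) kK) orbT.
rewrite /gshift -map_comp; apply: (@map_ext2 (fun x => rho (pi1 x)) pi2) => q qB /=.
apply: (Hr (pi1 q, pi2 q)); rewrite /pts !mem_cat.
move: qB; rewrite EpB mem_cat => /orP[qM|qM].
  by rewrite (map_f (fun q => (pi1 q, pi2 q)) qM).
by rewrite (map_f (fun q => (pi1 q, pi2 q)) qM) !orbT.
Qed.
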